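(* Let $n\in\mathbb{N}_{\geq1}\cup\{\infty\}$ and integers $h,r\geq1$ with $h+r\leq n$. Let ${\bf z}_h=(z_1,\ldots,z_h)$ and ${\bf t}_r=(t_1,\ldots,t_r)$ be indeterminates. Then in $\bigwedge^{h+r}V_n[[{\bf z}_h,{\bf t}_r]]$, $$\sigma_+({\bf z}_h)\mathbf{X}^h(0)\wedge\sigma_+({\bf t}_r)\mathbf{X}^r(0)=\prod_{i=1}^h\prod_{j=1}^r(z_i-t_j)\;\sigma_+({\bf z}_h,{\bf t}_r)\mathbf{X}^{h+r}(0),$$ where $\sigma_+({\bf z}_h,{\bf t}_r)=\sigma_+(z_1)\cdots\sigma_+(z_h)\sigma_+(t_1)\cdots\sigma_+(t_r)$.
   Context: For $n$ finite, $V_n=\mathbb{Q}[X]/(X^n)$ with basis $X^0,\ldots,X^{n-1}$; $V_\infty=\mathbb{Q}[X]$. $\mathbf{X}^m(0)=X^{m-1}\wedge\cdots\wedge X^0$. For an endomorphism $A$ of $V_n$, $\mathrm{tr}(A)$ is the derivation of $(\bigwedge V_n,\wedge)$ extending $A$; $X$ denotes multiplication by $X$; $\sigma_+(z)=\exp(\sum_{j\geq1}\mathrm{tr}(X^j)z^j/j)$, a $\wedge$-algebra endomorphism with $\sigma_+(z)X^i=\sum_{k\geq0}X^{i+k}z^k$; $\sigma_+({\bf z}_h)=\sigma_+(z_1)\cdots\sigma_+(z_h)$ and similarly for ${\bf t}_r$. *)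

(* Defs.v *)
(* Concrete model of  /\^m V_n [[x_1,...,x_N]]  by coordinates. *)
From mathcomp Require Import all_boot all_algebra.
Set Implicit Arguments. Unset Strict Implicit. Unset Printing Implicit Defensive.
Import GRing.Theory.
Local Open Scope ring_scope.

(* n in N_{>=1} \cup {oo}: [Some n] is finite n, [None] is infinity. *)
Definition natinf := option nat.
Definition leq_inf (k : nat) (n : natinf) : bool :=
  if n is Some m then (k <= m)%N else true.
(* X^k is a basis vector of V_n, i.e. k < n *)
Definition in_Vn (n : natinf) (k : nat) : bool := leq_inf k.+1 n.

Definition mono (N : nat) := {ffun 'I_N -> nat}.
Definition mdeg N (a : mono N) : nat := (\sum_(w < N) a w)%N.
Definition mono0 N : mono N := [ffun => 0%N].
Definition mono1 N (v : 'I_N) : mono N := [ffun w => nat_of_bool (w == v)].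

(* Q[[x]] : coefficient of x^a *)
Definition sser N := mono N -> rat.
(* V[[x]] : coefficient of x^a X^k  (coefficients of X^k, k >= n, never
   influence coordinates on the basis X^0..X^{n-1}, since sigma_+ only
   raises exponents) *)
Definition vser N := mono N -> nat -> rat.
(* /\^m V [[x]] : coefficient of x^a (X^{b 0} /\ ... /\ X^{b (m-1)}) for a
   basis wedge, i.e. b strictly decreasing *)
Definition wser N (m : nat) := mono N -> ('I_m -> nat) -> rat.

Definition Xser N (i : nat) : vser N :=
  fun a k => ((a == mono0 N) && (k == i))%:R.

(* sigma_+(x_v), extended Q[[x]]-linearly:  sigma_+(x_v) X^i = sum_c X^{i+c} x_v^c *)
Definition sigma_var N (v : 'I_N) (f : vser N) : vser N :=
  fun a k => \sum_(c < (minn (a v) k).+1)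
     f [ffun w => if w == v then (a w - c)%N else a w] (k - c)%N.

Definition sigma_vars N (s : seq 'I_N) (f : vser N) : vser N :=
  foldr (fun v g => sigma_var v g) f s.

(* the wedge product F 0 /\ F 1 /\ ... /\ F (m-1) of m series in V[[x]];
   coordinate on X^{b 0} /\ ... /\ X^{b (m-1)} of v_0 /\ ... /\ v_{m-1} is
   det [ (v_j)_{b l} ]_{j,l} *)
Definition wedge N m (F : 'I_m -> vser N) : wser N m :=
  fun a b => \sum_(d : {ffun 'I_m -> {ffun 'I_N -> 'I_(mdeg a).+1}} |
                    [forall w, (\sum_(j < m) (d j w : nat))%N == a w])
     \det (\matrix_(j < m, l < m) F j [ffun w => (d j w : nat)] (b l)).

Definition sone N : sser N := fun a => (a == mono0 N)%:R.
Definition smul N (f g : sser N) : sser N := fun a =>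
  \sum_(c : {ffun 'I_N -> 'I_(mdeg a).+1} | [forall w, (c w : nat) <= a w]%N)
     f [ffun w => (c w : nat)] * g [ffun w => (a w - c w)%N].
Definition sprod N (s : seq (sser N)) : sser N := foldr (@smul N) (@sone N) s.
Definition lin_diff N (u v : 'I_N) : sser N :=
  fun a => (a == mono1 u)%:R - (a == mono1 v)%:R.
Definition scale_w N m (f : sser N) (F : wser N m) : wser N m := fun a b =>
  \sum_(c : {ffun 'I_N -> 'I_(mdeg a).+1} | [forall w, (c w : nat) <= a w]%N)
     f [ffun w => (c w : nat)] * F [ffun w => (a w - c w)%N] b.

(* Variables: indeterminates indexed by 'I_(h+r); z_i = lshift r i, t_j = rshift h j *)
Definition zvars h r : seq 'I_(h + r) := [seq lshift r i | i <- enum 'I_h].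
Definition tvars h r : seq 'I_(h + r) := [seq rshift h j | j <- enum 'I_r].

(* factors of sigma_+(z_h) X^h(0) /\ sigma_+(t_r) X^r(0), using that sigma_+ is a
   /\-algebra endomorphism:  X^h(0) = X^{h-1} /\ ... /\ X^0 *)
Definition lhs_family h r (j : 'I_(h + r)) : vser (h + r) :=
  match split j with
  | inl i => sigma_vars (zvars h r) (Xser (h.-1 - i))
  | inr i => sigma_vars (tvars h r) (Xser (r.-1 - i))
  end.
Definition rhs_family h r (j : 'I_(h + r)) : vser (h + r) :=
  sigma_vars (zvars h r ++ tvars h r) (Xser ((h + r).-1 - j)).
Definition cross_prod h r : sser (h + r) :=
  sprod [seq lin_diff (lshift r i) (rshift h j) | i <- enum 'I_h, j <- enum 'I_r].

Arguments lhs_family h r j : clear implicits.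
Arguments rhs_family h r j : clear implicits.
Arguments cross_prod h r : clear implicits.
Arguments zvars h r : clear implicits.
Arguments tvars h r : clear implicits.

(* Main.v *)
Require Import Defs.
From mathcomp Require Import all_boot all_algebra.
From mathcomp Require Import mpoly.
From mathcomp Require Import ring zify perm.
Set Implicit Arguments. Unset Strict Implicit. Unset Printing Implicit Defensive.
Import GRing.Theory.
Local Open Scope ring_scope.


Section Alg.
Variable R0 : idomainType.

Definition Gp (K : nat) (y : R0) : {poly R0} := \sum_(e < K) y ^+ e *: 'X^e.

Lemma coef_Gp K y e : (Gp K y)`_e = if (e < K)%N then y ^+ e else 0.
Proof.
rewrite /Gp coef_sum; under eq_bigr do rewrite coefZ coefXn.
case: ltnP => [lt|ge].
  rewrite (bigD1 (Ordinal lt)) //= eqxx mulr1 big1 ?addr0 // => i ne.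
  have -> : (e == i) = false.
    by apply/negbTE; apply: contra ne => /eqP ei; apply/eqP/val_inj.
  by rewrite mulr0.
rewrite big1 // => i _; have -> : (e == i) = false.
  by apply/negbTE; rewrite neq_ltn (leq_trans (ltn_ord i) ge) orbT.
by rewrite mulr0.
Qed.

Lemma Gp_geom K y : (1 - y *: 'X) * Gp K y = 1 - (y ^+ K) *: 'X^K.
Proof.
elim: K => [|K IH]; first by rewrite /Gp big_ord0 mulr0 expr0 scale1r subrr.
rewrite /Gp big_ord_recr /= mulrDr -/(Gp K y) IH.
rewrite -!mul_polyC !rmorphXn /= !exprS.
set u := _ ^+ K; set v := _ ^+ K; ring.
Qed.

Lemma prod_geom (I : finType) (P : pred I) (F : I -> {poly R0}) K :
  (forall i, P i -> exists c, F i = 1 - c *: 'X^K) ->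
  exists T, \prod_(i | P i) F i = 1 + 'X^K * T.
Proof.
move=> HF; apply: (big_ind (fun p => exists T, p = 1 + 'X^K * T)).
- by exists 0; rewrite mulr0 addr0.
- move=> p q [T1 ->] [T2 ->]; exists (T1 + T2 + 'X^K * T1 * T2); ring.
- move=> i /HF [c ->]; exists (- c%:P); rewrite -mul_polyC; ring.
Qed.

Variables (m : nat) (y : 'I_m -> R0).

Definition GY K : {poly R0} := \prod_(i < m) Gp K (y i).
Definition Qm (i : 'I_m) : {poly R0} := \prod_(k < m | k != i) (1 - y k *: 'X).

Lemma size_Qm i : (size (Qm i) <= m)%N.
Proof.
have nz k : 1 - y k *: 'X != 0 :> {poly R0}.
  apply/eqP => H; have := congr1 (fun p : {poly R0} => p`_0) H => /=.
  rewrite coefB coef1 coefZ coefX.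
  by rewrite mulr0 subr0 coef0 => /eqP; rewrite oner_eq0.
rewrite /Qm size_prod; last by move=> k _; exact: nz.
have sz k : (size (1 - y k *: 'X : {poly R0})%R <= 2)%N.
  apply: leq_trans (size_polyD _ _) _; rewrite geq_max size_poly1 /=.
  by rewrite size_polyN (leq_trans (size_scale_leq _ _)) // size_polyX.
have cardP : #|[pred k : 'I_m | k != i]| = m.-1.
  by rewrite cardC1 card_ord.
rewrite cardP.
have : (\sum_(k < m | k != i) size (1 - y k *: 'X : {poly R0})%R <= m.-1 * 2)%N.
  rewrite -cardP -sum1_card big_distrl /=; apply: leq_sum => k _.
  by rewrite mul1n.
clear cardP sz nz; case: m y i => [|mm] yy i; first by case: i.
move=> H; move: H; rewrite /= leq_subLR; set S := \sum_(_ < _ | _) _; lia.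
Qed.

Lemma QGY K i k : (k < K)%N -> (Qm i * GY K)`_k = y i ^+ k.
Proof.
move=> kK; rewrite /GY (bigD1 i) //= mulrCA /Qm -big_split /=.
have [T ->] : exists T, \prod_(k0 < m | k0 != i)
    ((1 - y k0 *: 'X) * Gp K (y k0)) = 1 + 'X^K * T.
  by apply: prod_geom => j _; exists (y j ^+ K); exact: Gp_geom.
by rewrite mulrDr mulr1 coefD mulrCA coefXnM kK addr0 coef_Gp kK.
Qed.

Lemma coef_sum_trunc (q g : {poly R0}) k : (size q <= m)%N ->
  \sum_(j < m) q`_(m.-1 - j) * (g * 'X^(m.-1 - j))`_k = (q * g)`_k.
Proof.
move=> szq.
rewrite -(big_mkord xpredT (fun j => q`_(m.-1 - j) * (g * 'X^(m.-1 - j))`_k)).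
rewrite big_nat_rev /= add0n.
rewrite (eq_big_nat _ _ (F2 := fun p => q`_p * (g * 'X^p)`_k)); last first.
  by move=> p /andP [_ pm]; congr (q`_ _ * (g * 'X^ _)`_k); lia.
rewrite big_mkord coefM.
rewrite (big_ord_widen (m + k.+1) (fun p => q`_p * (g * 'X^p)`_k)) ?leq_addr //.
rewrite (big_ord_widen (m + k.+1) (fun p => q`_p * g`_(k - p))) ?leq_addl //.
rewrite big_mkcond [RHS]big_mkcond; apply: eq_bigr => p _ /=.
rewrite coefMXn; case: (ltnP p m) => pm; case: (ltnP p k.+1) => pk.
- by [].
- by rewrite mulr0.
- by rewrite nth_default ?mul0r // (leq_trans szq pm).
- by [].
Qed.

Variables (M : nat) (b : 'I_M -> nat).
Definition Emx : 'M[R0]_(m, M) := \matrix_(i, l) y i ^+ b l.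
Definition Vmx K : 'M[R0]_(m, M) := \matrix_(j, l) (GY K * 'X^(m.-1 - j))`_(b l).
Definition Cmx : 'M[R0]_m := \matrix_(i, j) (Qm i)`_(m.-1 - j).

Lemma EC K : (forall l, b l < K)%N -> Emx = Cmx *m Vmx K.
Proof.
move=> bK; apply/matrixP => i l; rewrite !mxE.
under eq_bigr do rewrite !mxE.
by rewrite coef_sum_trunc ?size_Qm // QGY.
Qed.

End Alg.

Section Det.
Variable R0 : idomainType.

Lemma det_revrev n (A : 'M[R0]_n) :
  \det (\matrix_(i, j) A (rev_ord i) (rev_ord j)) = \det A.
Proof.
pose s : {perm 'I_n} := perm rev_ord_inj.
have -> : \matrix_(i, j) A (rev_ord i) (rev_ord j) = row_perm s (col_perm s A).
  by apply/matrixP => i j; rewrite !mxE !permE.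
rewrite row_permE col_permE !det_mulmx !det_perm odd_permV.
by rewrite mulrCA -signr_addb addbb expr0 mulr1.
Qed.

Variables (m : nat) (y : 'I_m -> R0).
Definition b0 : 'I_m -> nat := fun l => (m.-1 - l)%N.

Lemma b0_lt l : (b0 l < m)%N.
Proof. rewrite /b0; have := ltn_ord l; lia. Qed.

Lemma detV0 : \det (Vmx y b0 m) = 1.
Proof.
rewrite det_trig; last first.
  apply/is_trig_mxP => i j ij; rewrite mxE coefMXn /b0 ifT //.
  have := ltn_ord j; lia.
rewrite big1 // => i _; rewrite mxE coefMXn /b0 ltnn subnn /GY.
rewrite (big_morph (fun p : {poly R0} => p`_0) (@coef0M _) (coef1 _ 0)) /=.
rewrite big1 // => k _; rewrite coef_Gp expr0.
by case: (m) k => [|mm] [].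
Qed.

Lemma detE0 : \det (Emx y b0) = \prod_(i < m) \prod_(j < m | (i < j)%N) (y i - y j).
Proof.
pose y' : 'rV[R0]_m := \row_i y (rev_ord i).
have -> : Emx y b0 = \matrix_(i, j) (Vandermonde m y')^T (rev_ord i) (rev_ord j).
  apply/matrixP => i j; rewrite !mxE rev_ordK /b0 /=; congr (_ ^+ _).
  have := ltn_ord j; lia.
rewrite det_revrev det_tr det_Vandermonde.
under eq_bigr do under eq_bigr do rewrite !mxE.
rewrite (reindex_inj rev_ord_inj) /=.
under eq_bigr => i _ do rewrite (reindex_inj rev_ord_inj) /=.
transitivity (\prod_(i < m) \prod_(j < m | (j < i)%N) (y j - y i)).
  apply: eq_bigr => i _; apply: eq_big => [j|j _]; last by rewrite !rev_ordK.
  by rewrite /=; have := ltn_ord i; have := ltn_ord j; lia.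
by rewrite (exchange_big_dep xpredT).
Qed.

Lemma detC : \det (Cmx y) = \prod_(i < m) \prod_(j < m | (i < j)%N) (y i - y j).
Proof.
by rewrite -detE0 (EC y b0_lt) det_mulmx detV0 mulr1.
Qed.

End Det.


Section Bridge.
Variable N : nat.
Notation R := {mpoly rat[N]}.

Definition mnm (a : mono N) : 'X_{1..N} := [multinom a i | i < N].

Lemma mnmE' a i : mnm a i = a i.
Proof. by rewrite /mnm mnmE. Qed.

Lemma mnm_eq a c : (mnm a == mnm c) = (a == c).
Proof.
apply/eqP/eqP => [/mnmP H|->//]; apply/ffunP => i; by have := H i; rewrite !mnmE'.
Qed.

Lemma mnm0' : mnm (mono0 N) = 0%MM.
Proof. by apply/mnmP => i; rewrite mnmE' mnm0E ffunE. Qed.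

Lemma mnm1' u : mnm (mono1 u) = U_(u)%MM.
Proof. by apply/mnmP => i; rewrite mnmE' mnm1E ffunE eq_sym. Qed.

Lemma le_mdeg (a : mono N) w : (a w <= Defs.mdeg a)%N.
Proof. by rewrite /Defs.mdeg (bigD1 w) //= leq_addr. Qed.

Lemma mdeg_mnm a : mpoly.mdeg (mnm a) = Defs.mdeg a.
Proof. by rewrite mdegE; apply: eq_bigr => i _; rewrite mnmE'. Qed.

Lemma coefM_ffun (B : nat) (p q : R) (a : mono N) :
  (forall w, a w < B.+1)%N ->
  (p * q)@_(mnm a) =
  \sum_(c : {ffun 'I_N -> 'I_B.+1} | [forall w, (c w : nat) <= a w]%N)
     p@_(mnm [ffun w => (c w : nat)]) * q@_(mnm [ffun w => (a w - c w)%N]).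
Proof.
move=> aB.
have lt : (mpoly.mdeg (mnm a) < (Defs.mdeg a).+1)%N by rewrite mdeg_mnm.
rewrite (mcoeff_poly_mul_lin p q lt).
pose h (k : 'X_{1..N < (Defs.mdeg a).+1}) : {ffun 'I_N -> 'I_B.+1} :=
  [ffun w => inord (k w)].
pose h' (c : {ffun 'I_N -> 'I_B.+1}) : 'X_{1..N < (Defs.mdeg a).+1} :=
  insubd bm0 (mnm [ffun w => (c w : nat)]).
rewrite (reindex_onto h h') /=; last first.
  move=> c /forallP cle; apply/ffunP => w; rewrite ffunE.
  rewrite /h' insubdK; last first.
    rewrite -topredE /= mdeg_mnm ltnS /Defs.mdeg; apply: leq_sum => i _; rewrite ffunE.
    exact: cle.
  by rewrite mnmE' ffunE inord_val.
apply: eq_big => k.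
  apply/idP/idP.
  - move=> /mnm_lepP kle.
    have kB w : (k w < B.+1)%N by apply: leq_ltn_trans (kle w) _; rewrite mnmE'.
    apply/andP; split.
      apply/forallP => w; rewrite ffunE inordK //; by have := kle w; rewrite mnmE'.
    apply/eqP/val_inj; rewrite /h' val_insubd.
    have -> : mnm [ffun w => (h k w : nat)] = k.
      by apply/mnmP => w; rewrite mnmE' !ffunE inordK.
    by case: k {kle kB} => kk /= ->.
  - move=> /andP [/forallP hle /eqP hk].
    apply/mnm_lepP => w; rewrite mnmE'.
    have := congr1 val hk; rewrite /h' val_insubd.
    case: ifP => _ kE.
      by rewrite -kE mnmE' ffunE; exact: hle.
    by rewrite -kE /= mnm0E.
move=> /mnm_lepP kle.
have kB w : (k w < B.+1)%N by apply: leq_ltn_trans (kle w) _; rewrite mnmE'.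
have -> : mnm [ffun w => (h k w : nat)] = k.
  by apply/mnmP => w; rewrite mnmE' !ffunE inordK.
congr (_ * _); congr (q@_ _); apply/mnmP => w.
by rewrite mnmBE !mnmE' !ffunE inordK.
Qed.


Lemma coef_prod_ffun (B m : nat) (p : 'I_m -> R) (a : mono N) :
  (forall w, a w < B.+1)%N ->
  (\prod_(j < m) p j)@_(mnm a) =
  \sum_(d : {ffun 'I_m -> {ffun 'I_N -> 'I_B.+1}} |
          [forall w, (\sum_(j < m) (d j w : nat))%N == a w])
     \prod_(j < m) (p j)@_(mnm [ffun w => (d j w : nat)]).
Proof.
elim: m p a => [|m IH] p a aB.
  rewrite big_ord0 mcoeff1.
  pose d0 : {ffun 'I_0 -> {ffun 'I_N -> 'I_B.+1}} := [ffun _ => [ffun _ => ord0]].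
  have all0 (d : {ffun 'I_0 -> {ffun 'I_N -> 'I_B.+1}}) : d = d0.
    by apply/ffunP => -[].
  have [a0|an0] := eqVneq a (mono0 N).
    rewrite a0 mnm0' eqxx (big_pred1 d0); first by rewrite big_ord0.
    move=> d /=; rewrite (all0 d) eqxx; apply/forallP => w.
    by rewrite big_ord0 ffunE.
  have -> : (mnm a == 0%MM) = false by rewrite -mnm0' mnm_eq (negbTE an0).
  rewrite big_pred0 //= => d; apply/negbTE; apply: contra an0 => /forallP H.
  apply/eqP/ffunP => w; rewrite ffunE; have := H w; by rewrite big_ord0 eq_sym => /eqP.
rewrite big_ord_recl (coefM_ffun _ _ aB).
have a'B (c : {ffun 'I_N -> 'I_B.+1}) w : ([ffun w => (a w - c w)%N] w < B.+1)%N.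
  by rewrite ffunE; apply: leq_ltn_trans (leq_subr _ _) (aB w).
under eq_bigr => c _ do rewrite (IH _ _ (a'B c)) big_distrr /=.
rewrite pair_big_dep /=.
pose T := {ffun 'I_N -> 'I_B.+1}.
pose hh (x : T * {ffun 'I_m -> T}) : {ffun 'I_m.+1 -> T} :=
  [ffun j => if unlift ord0 j is Some j' then x.2 j' else x.1].
pose hh' (d : {ffun 'I_m.+1 -> T}) : T * {ffun 'I_m -> T} :=
  (d ord0, [ffun j => d (lift ord0 j)]).
have hK : cancel hh hh'.
  move=> [c d'] /=; rewrite /hh' /hh /= ffunE unlift_none; congr (_, _).
  by apply/ffunP => j; rewrite !ffunE liftK.
have hK' : cancel hh' hh.
  move=> d; apply/ffunP => j; rewrite /hh /hh' ffunE.
  by case: unliftP => [j' ->|->] /=; rewrite ?ffunE.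
rewrite (reindex hh (onW_bij _ (Bijective hK hK'))) /=.
apply: eq_big => [[c d']|[c d'] _] /=.
  apply/idP/idP.
  - move=> /andP [/forallP c_le /forallP Hd]; apply/forallP => w.
    rewrite big_ord_recl /hh !ffunE unlift_none /=.
    under eq_bigr => j _ do rewrite ffunE liftK.
    have := Hd w; rewrite ffunE => /eqP ->; rewrite subnKC //; exact: c_le.
  - move=> /forallP H; apply/andP; split; apply/forallP => w; have := H w;
    rewrite big_ord_recl /hh !ffunE unlift_none /=;
    under eq_bigr => j _ do rewrite ffunE liftK;
    move=> /eqP <-; rewrite ?leq_addr //.
    by rewrite addKn.
rewrite big_ord_recl /hh !ffunE unlift_none /=; congr (_ * _).
apply: eq_bigr => j _; by rewrite ffunE liftK.
Qed.

Lemma mcoeff_sign (b : bool) (x : R) m : ((-1) ^+ b * x)@_m = (-1) ^+ b * x@_m.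
Proof. by case: b; rewrite ?expr1 ?expr0 ?mulN1r ?mul1r ?mcoeffN. Qed.

Lemma wedge_coef m (F : 'I_m -> vser N) (M : 'M[R]_m) (b : 'I_m -> nat) a :
  (forall j l c, F j c (b l) = (M j l)@_(mnm c)) ->
  wedge F a b = (\det M)@_(mnm a).
Proof.
move=> FM; rewrite /wedge /determinant.
under eq_bigr => d _ do rewrite /determinant.
rewrite exchange_big /= raddf_sum /=; apply: eq_bigr => s _.
rewrite mcoeff_sign -big_distrr /=; congr (_ * _).
rewrite (coef_prod_ffun (B := Defs.mdeg a)); last by move=> w; rewrite ltnS le_mdeg.
by apply: eq_bigr => d _; apply: eq_bigr => j _; rewrite !mxE FM.
Qed.

Definition coefs (p : R) : sser N := fun c => p@_(mnm c).

Lemma smul_coef (p q : R) a : smul (coefs p) (coefs q) a = coefs (p * q) a.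
Proof.
rewrite /smul /coefs (coefM_ffun (B := Defs.mdeg a)) //.
by move=> w; rewrite ltnS le_mdeg.
Qed.

Lemma scale_w_coef m (f : R) (g : sser N) (G : wser N m) (D : R) b a :
  (forall c, g c = f@_(mnm c)) ->
  (forall a', G a' b = D@_(mnm a')) ->
  scale_w g G a b = (f * D)@_(mnm a).
Proof.
move=> gf GD; rewrite /scale_w (coefM_ffun (B := Defs.mdeg a)); last first.
  by move=> w; rewrite ltnS le_mdeg.
by apply: eq_bigr => c _; rewrite GD gf.
Qed.

Lemma sprod_coef (I : Type) (s : seq I) (F : I -> sser N) (P : I -> R) :
  (forall i c, F i c = (P i)@_(mnm c)) ->
  forall c, sprod (map F s) c = (\prod_(i <- s) P i)@_(mnm c).
Proof.
move=> FP; elim: s => [|i s IH] c /=.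
  by rewrite big_nil /sone mcoeff1 -mnm0' mnm_eq.
rewrite big_cons; transitivity (smul (coefs (P i)) (coefs (\prod_(j <- s) P j)) c);
  last exact: smul_coef.
rewrite /smul; apply: eq_bigr => c' _.
by rewrite FP IH.
Qed.

Definition Gs K (s : seq 'I_N) : {poly R} := \prod_(v <- s) Gp K 'X_v.

Lemma mcoeff_XnM (v : 'I_N) e (p : R) m :
  ('X_v ^+ e * p)@_m = if (e <= m v)%N then p@_(m - U_(v) *+ e)%MM else 0.
Proof.
rewrite mulrC mpolyXn; case: ifP => le.
  have {1}-> : m = (U_(v) *+ e + (m - U_(v) *+ e))%MM.
    apply/mnmP => w; rewrite mnmDE mnmBE mulmnE mnm1E.
    case: eqP => [<-|_]; first by rewrite mul1n subnKC.
    by rewrite mul0n add0n subn0.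
  by rewrite mcoeffMX.
rewrite mcoeffM big1 // => -[k1 k2] /= /eqP mE; rewrite mcoeffX.
case: eqP => [k2E|_]; last by rewrite mulr0.
exfalso; move: le; rewrite mE mnmDE -k2E mulmnE mnm1E eqxx mul1n.
by rewrite leq_addl.
Qed.

Lemma sig_coef K (s : seq 'I_N) i c k : (k < K)%N ->
  sigma_vars s (@Xser N i) c k = ((Gs K s * 'X^i)`_k)@_(mnm c).
Proof.
elim: s c k => [|v s IH] c k kK /=.
  rewrite /Gs big_nil mul1r coefXn /Xser.
  rewrite mcoeffMn mcoeff1 -mnm0' mnm_eq.
  by case: (c == mono0 N); case: (k == i); rewrite ?mulr1n ?mulr0n.
rewrite /sigma_var /Gs big_cons -mulrA coefM raddf_sum /=.
under [RHS]eq_bigr => e _ do rewrite coef_Gp (leq_ltn_trans _ kK) ?(leq_ord e) //.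
under [RHS]eq_bigr => e _ do rewrite mcoeff_XnM mnmE'.
rewrite [RHS]big_mkcond /=.
rewrite (big_ord_widen k.+1 (fun e : nat => sigma_vars s (@Xser N i)
   [ffun w => if w == v then (c w - e)%N else c w] (k - e)%N)); last first.
  by rewrite ltnS geq_minr.
rewrite big_mkcond; apply: eq_bigr => e _ /=.
have -> : (e < (minn (c v) k).+1)%N = (e <= c v)%N.
  by rewrite ltnS leq_min (leq_ord e) andbT.
case: ifP => // le.
rewrite IH; last by apply: leq_ltn_trans (leq_subr _ _) kK.
rewrite /Gs; congr (_@_ _); apply/mnmP => w.
rewrite mnmE' mnmBE mulmnE mnm1E mnmE' ffunE eq_sym.
by case: (v == w); rewrite ?mul1n ?mul0n ?subn0.
Qed.

End Bridge.


Section Main.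
Variables h r : nat.
Notation N := (h + r)%N.
Notation R := {mpoly rat[h + r]}.

Definition yw : 'I_N -> R := fun k => 'X_k.
Definition yz : 'I_h -> R := fun i => 'X_(lshift r i).
Definition yt : 'I_r -> R := fun j => 'X_(rshift h j).

Lemma Gs_z K : Gs K (zvars h r) = GY yz K.
Proof. by rewrite /Gs /zvars big_map big_enum. Qed.
Lemma Gs_t K : Gs K (tvars h r) = GY yt K.
Proof. by rewrite /Gs /tvars big_map big_enum. Qed.
Lemma Gs_w K : Gs K (zvars h r ++ tvars h r) = GY yw K.
Proof.
rewrite /Gs big_cat -/(Gs K (zvars h r)) -/(Gs K (tvars h r)) Gs_z Gs_t.
by rewrite /GY [in RHS]big_split_ord.
Qed.

Lemma Ecol M (b : 'I_M -> nat) : Emx yw b = col_mx (Emx yz b) (Emx yt b).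
Proof.
apply/matrixP => i l; rewrite -(splitK i); case: (split i) => k /=.
  by rewrite col_mxEu !mxE.
by rewrite col_mxEd !mxE.
Qed.

Lemma Xsub_neq0 (u v : 'I_N) : u != v -> ('X_u - 'X_v : R) != 0.
Proof.
move=> uv; apply/eqP => H; have := congr1 (mcoeff U_(u)) H.
rewrite mcoeffB !mcoeffXU mcoeff0 eqxx eq_sym (negbTE uv) subr0 => /eqP.
by rewrite oner_eq0.
Qed.

Definition CP2 : R := \prod_(i < h) \prod_(j < r) (yz i - yt j).

Lemma split_delta :
  \prod_(i < N) \prod_(j < N | (i < j)%N) (yw i - yw j) =
  (\prod_(i < h) \prod_(j < h | (i < j)%N) (yz i - yz j)) *
  (\prod_(i < r) \prod_(j < r | (i < j)%N) (yt i - yt j)) * CP2.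
Proof.
rewrite big_split_ord /=.
under eq_bigr => i _ do rewrite big_split_ord /=.
under [X in _ * X]eq_bigr => i _ do rewrite big_split_ord /=.
rewrite !big_split /= /CP2.
have -> : \prod_(i < h) \prod_(j < r | (lshift r i < rshift h j)%N) (yw (lshift r i) - yw (rshift h j))
   = \prod_(i < h) \prod_(j < r) (yz i - yt j).
  apply: eq_bigr => i _; apply: eq_bigl => j /=; have := ltn_ord i; lia.
have -> : \prod_(i < r) \prod_(j < h | (rshift h i < lshift r j)%N) (yw (rshift h i) - yw (lshift r j))
   = 1.
  apply: big1 => i _; apply: big_pred0 => j /=; have := ltn_ord j; lia.
have -> : \prod_(i < h) \prod_(j < h | (lshift r i < lshift r j)%N) (yw (lshift r i) - yw (lshift r j))
   = \prod_(i < h) \prod_(j < h | (i < j)%N) (yz i - yz j) by [].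
have -> : \prod_(i < r) \prod_(j < r | (rshift h i < rshift h j)%N) (yw (rshift h i) - yw (rshift h j))
   = \prod_(i < r) \prod_(j < r | (i < j)%N) (yt i - yt j).
  apply: eq_bigr => i _; apply: eq_bigl => j /=; lia.
rewrite mul1r; set A := \prod_(i < h) _; set B := \prod_(i < h) _.
by rewrite mulrAC.
Qed.

Lemma detCz_neq0 : \det (Cmx yz) != 0.
Proof.
rewrite detC; apply/prodf_neq0 => i _; apply/prodf_neq0 => j ij.
apply: Xsub_neq0; apply: contraTneq ij => /(congr1 val) /= ->; by rewrite ltnn.
Qed.

Lemma detCt_neq0 : \det (Cmx yt) != 0.
Proof.
rewrite detC; apply/prodf_neq0 => i _; apply/prodf_neq0 => j ij.
apply: Xsub_neq0; apply: contraTneq ij => /(congr1 val) /= /eqP.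
by rewrite eqn_add2l => /eqP ->; rewrite ltnn.
Qed.

Lemma key (b : 'I_N -> nat) K : (forall l, b l < K)%N ->
  \det (col_mx (Vmx yz b K) (Vmx yt b K)) = CP2 * \det (Vmx yw b K).
Proof.
move=> bK.
have E : Cmx yw *m Vmx yw b K =
    block_mx (Cmx yz) 0 0 (Cmx yt) *m col_mx (Vmx yz b K) (Vmx yt b K).
  by rewrite -EC // Ecol mul_block_col !mul0mx addr0 add0r -!EC.
move/(congr1 determinant): E; rewrite !det_mulmx det_ublock.
rewrite detC split_delta -!detC => E.
apply: (mulfI (x := \det (Cmx yz) * \det (Cmx yt))).
  by rewrite mulf_neq0 ?detCz_neq0 ?detCt_neq0.
by rewrite -E mulrA.
Qed.

End Main.

Lemma cross_coef h r c : cross_prod h r c = (@CP2 h r)@_(mnm c).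
Proof.
have -> : cross_prod h r = sprod (map (fun x : 'I_h * 'I_r =>
    lin_diff (lshift r x.1) (rshift h x.2)) [seq (i, j) | i <- enum 'I_h, j <- enum 'I_r]).
  rewrite /cross_prod; congr sprod; elim: (enum 'I_h) => //= i s IH.
  by rewrite map_cat IH -map_comp.
rewrite (@sprod_coef _ _ _ _ (fun x : 'I_h * 'I_r =>
   ('X_(lshift r x.1) - 'X_(rshift h x.2) : {mpoly rat[h + r]}))).
  rewrite big_allpairs /CP2 big_enum; congr (_@_ _); apply: eq_bigr => i _; by rewrite big_enum.
move=> x c'; rewrite /lin_diff mcoeffB !mcoeffX.
by rewrite -!mnm1' !mnm_eq ![mono1 _ == c']eq_sym.
Qed.

Theorem main_thm (h r : nat) (a : mono (h + r)) (b : 'I_(h + r) -> nat) :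
    wedge (lhs_family h r) a b
    = scale_w (cross_prod h r) (wedge (rhs_family h r)) a b.
Proof.
pose K := (\sum_l b l).+1.
have bK l : (b l < K)%N by rewrite ltnS (bigD1 l) //= leq_addr.
rewrite (wedge_coef (M := col_mx (Vmx (@yz h r) b K) (Vmx (@yt h r) b K))); last first.
  move=> j l c; rewrite /lhs_family [col_mx _ _ _ _]mxE.
  case: (split j) => k; rewrite !mxE (sig_coef _ _ _ (bK l)) ?Gs_z ?Gs_t //.
rewrite (scale_w_coef (f := @CP2 h r) (D := \det (Vmx (@yw h r) b K))).
- by rewrite key.
- exact: cross_coef.
- move=> a'; apply: wedge_coef => j l c.
  by rewrite /rhs_family mxE (sig_coef _ _ _ (bK l)) Gs_w.
Qed.


Unset Implicit Arguments.

Theorem mainTheorem10 (n : natinf) (h r : nat)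
  (hh : (1 <= h)%N) (hr : (1 <= r)%N) (hn : leq_inf (h + r) n) :
  forall (a : mono (h + r)) (b : 'I_(h + r) -> nat),
    (forall l, in_Vn n (b l)) ->
    (forall l l' : 'I_(h + r), (l < l')%N -> (b l' < b l)%N) ->
    wedge (lhs_family h r) a b
    = scale_w (cross_prod h r) (wedge (rhs_family h r)) a b.
Proof.
move=> a b _ _; exact: main_thm.
Qed.
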